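(* In the Cross Model on the strip $\mathbb{Z}_K$ (with $K\ge1$ an integer and $\varepsilon\in(0,1)$), the processes $(\mathbf{D}^{K,d}_i)_{i\ge0}$ and $(\mathbf{Y}_i)_{i\ge0}$ are Markov chains. Moreover, $(\mathbf{Y}_i)_{i\ge0}$ has the law of the discrete-time synchronous TASEP on $[\![-K+1,K]\!]$ in which the jump probability, the entry probability and the exit probability are all equal to $\varepsilon$.
   Context: Cross Model: $\mathbb{Z}_K=\mathbb{Z}\times[\![-K,K]\!]$ with vertical edges $(i,j)\to(i,j+1)$ ($j\in[\![-K,K-1]\!]$), horizontal edges $(i,j)\to(i+1,j)$, and diagonal edges $(i,j)\to(i+1,j\pm1)$ (within the strip). Vertical and horizontal edges have length $1$, diagonal edges length $2$. All vertical and diagonal edges are open; each horizontal edge is open with probability $1-\varepsilon$ and closed with probability $\varepsilon$, independently. For $i\ge0$, $j\in[\![-K,K]\!]$, $D^{K,d}(i,j)$ is the length of a shortest path of open edges in $\mathbb{Z}_K$ from $(0,0)$ to $(i,j)$, and $\mathbf{D}^{K,d}_i=(D^{K,d}(i,j))_{j\in[\![-K,K]\!]}$. Define $\mathbf{Y}_i=(Y_i^j)_{j\in[\![-K+1,K]\!]}\in\{\bullet,\circ\}^{2K}$ by $Y_i^j=\bullet$ if $D^{K,d}(i,j)=D^{K,d}(i,j-1)-1$ and $Y_i^j=\circ$ if $D^{K,d}(i,j)=D^{K,d}(i,j-1)+1$ (one of these always holds); site $j$ is occupied by a particle at time $i$ iff $Y_i^j=\bullet$. The synchronous TASEP on $[\![-K+1,K]\!]$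 with jump, entry and exit probability $\varepsilon$ is the Markov chain on $\{\bullet,\circ\}^{2K}$ where, from time $t$ to $t+1$, independently: each particle at $j\in[\![-K+1,K-1]\!]$ such that site $j+1$ is empty at time $t$ moves to $j+1$ with probability $\varepsilon$; if site $-K+1$ is empty at time $t$, a particle enters there with probability $\varepsilon$; if site $K$ is occupied at time $t$, its particle exits with probability $\varepsilon$. *)

(* Defs.v *)
From HB Require Import structures.
From mathcomp Require Import all_boot all_order all_algebra.
From mathcomp Require Import all_classical all_reals all_analysis.
Set Implicit Arguments. Unset Strict Implicit. Unset Printing Implicit Defensive.
Import Order.TTheory GRing.Theory Num.Theory.
Local Open Scope classical_set_scope.
Local Open Scope ring_scope.

Definition vertex := (int * int)%type.

Definition in_strip (K : nat) (v : vertex) : Prop :=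
  (- (K%:Z) <= v.2) /\ (v.2 <= K%:Z).

(* [step K op u v l] : {u,v} is an OPEN edge of length l of Z_K, where
   [op i j] means that the horizontal edge (i,j)--(i+1,j) is open. *)
Definition step (K : nat) (op : int -> int -> Prop) (u v : vertex) (l : nat) : Prop :=
  in_strip K u /\ in_strip K v /\
  [\/ (u.1 = v.1 /\ `|u.2 - v.2| = 1 /\ l = 1%N),
      (u.2 = v.2 /\ `|u.1 - v.1| = 1 /\ op (Num.min u.1 v.1) u.2 /\ l = 1%N)
    | (`|u.1 - v.1| = 1 /\ `|u.2 - v.2| = 1 /\ l = 2%N)].

Inductive walk (K : nat) (op : int -> int -> Prop) : vertex -> vertex -> nat -> Prop :=
| walk_nil u : in_strip K u -> walk K op u u 0
| walk_cons u w v l n : step K op u w l -> walk K op w v n -> walk K op u v (l + n).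

Definition is_dist (K : nat) (op : int -> int -> Prop) (u v : vertex) (n : nat) : Prop :=
  walk K op u v n /\ forall m, walk K op u v m -> (n <= m)%N.

Definition row (K : nat) (k : 'I_(K.*2.+1)) : int := k%:Z - K%:Z.
Definition site (K : nat) (k : 'I_(K.*2)) : int := k%:Z - K%:Z + 1.

Definition Dstate (K : nat) := {ffun 'I_(K.*2.+1) -> nat}.
(* true = occupied (bullet), false = empty (circle) *)
Definition Ystate (K : nat) := {ffun 'I_(K.*2) -> bool}.

(* Y^j = bullet iff D(i,j) = D(i,j-1) - 1; site k (j = k-K+1) uses rows
   lift ord0 k (j) and widen k (j-1). *)
Definition Y_of (K : nat) (x : Dstate K) : Ystate K :=
  [ffun k : 'I_(K.*2) => ((x (lift ord0 k)).+1 == x (widen_ord (leqnSn _) k))%N].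

Section Events.
Context {T : Type} (K : nat) (H : int -> int -> set T).
(* H i j = event that the horizontal edge (i,j)--(i+1,j) is open *)

Definition D_event (i : nat) (x : Dstate K) : set T :=
  [set t | forall k : 'I_(K.*2.+1),
     is_dist K (fun a b => H a b t) (0, 0) (i%:Z, row k) (x k)].

Definition Y_event (i : nat) (y : Ystate K) : set T :=
  [set t | exists x : Dstate K, D_event i x t /\ Y_of x = y].
End Events.

(* [E i s] is the event {X_i = s}. *)
Definition markov_with {d} {T : measurableType d} {R : realType}
  (P : probability T R) {S : Type} (E : nat -> S -> set T) (Q : S -> S -> R) : Prop :=
  forall (n : nat) (x : nat -> S),
    P [set t | forall k, (k <= n.+1)%N -> E k (x k) t] =
    (P [set t | forall k, (k <= n)%N -> E k (x k) t] * (Q (x n) (x n.+1))%:E)%E.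

Definition is_markov {d} {T : measurableType d} {R : realType}
  (P : probability T R) {S : Type} (E : nat -> S -> set T) : Prop :=
  exists Q : S -> S -> R, markov_with P E Q.

(* Extended configuration on positions m = 0 .. 2K+1: position 0 is a virtual
   always-occupied reservoir (left of site -K+1), position m (1<=m<=2K) is
   site index m-1, position 2K+1 is a virtual always-empty sink (right of K).
   Bond b : 'I_(2K+1) joins positions b and b+1: bond 0 = entry,
   bond 2K = exit, other bonds = jumps between neighbouring sites. *)
Definition ext (K : nat) (y : Ystate K) (m : nat) : bool :=
  if m == 0%N then true
  else if (m <= K.*2)%N then
    (if insub m.-1 is Some k then y k else false)
  else false.

Definition active (K : nat) (y : Ystate K) : {set 'I_(K.*2.+1)} :=
  [set b : 'I_(K.*2.+1) | ext y b && ~~ ext y b.+1].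

Definition apply_moves (K : nat) (y : Ystate K) (S : {set 'I_(K.*2.+1)}) : Ystate K :=
  [ffun k : 'I_(K.*2) =>
     (y k && (lift ord0 k \notin S)) || (widen_ord (leqnSn _) k \in S)].

(* each possible move (jump / entry / exit) happens independently with prob. eps *)
Definition tasep_kernel {R : realType} (K : nat) (eps : R) (y y' : Ystate K) : R :=
  \sum_(S : {set 'I_(K.*2.+1)} | (S \subset active y) && (apply_moves y S == y'))
     eps ^+ #|S| * (1 - eps) ^+ (#|active y| - #|S|).

(* Main.v *)
Require Import Defs.
From HB Require Import structures.
From mathcomp Require Import all_boot all_order all_algebra.
From mathcomp Require Import all_classical all_reals all_analysis.
From mathcomp Require Import zify ring.
Set Implicit Arguments. Unset Strict Implicit. Unset Printing Implicit Defensive.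
Import Order.TTheory GRing.Theory Num.Theory.
Local Open Scope classical_set_scope.
Local Open Scope ring_scope.
Section Comb.
Variable K : nat.

Definition Xn (x : Dstate K) (m : nat) : nat := x (inord m).

Lemma XnE (x : Dstate K) (k : 'I_(K.*2.+1)) m : nat_of_ord k = m -> x k = Xn x m.
Proof. by move=> <-; rewrite /Xn inord_val. Qed.

Lemma YE (x : Dstate K) (k : 'I_(K.*2)) : Y_of x k = ((Xn x k.+1).+1 == Xn x k).
Proof.
by rewrite ffunE (@XnE x (lift ord0 k) k.+1) ?(@XnE x (widen_ord _ k) k) //= /bump /= add1n.
Qed.

Lemma ext_pos (x : Dstate K) m : (0 < m <= K.*2)%N ->
  ext (Y_of x) m = ((Xn x m).+1 == Xn x m.-1).
Proof.
move=> /andP[m0 mN]; rewrite /ext; case: eqP => [m0'|_]; first by rewrite m0' in m0.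
rewrite ifT //; case: insubP => [k' _ kv|].
  by rewrite YE kv prednK.
by move=> h; exfalso; move: h; lia.
Qed.

Lemma ext_big (y : Ystate K) m : (K.*2 < m)%N -> ext y m = false.
Proof. move=> h; rewrite /ext; case: eqP => [m0|_]; first by rewrite m0 in h.
by rewrite leqNgt h. Qed.

Definition actn (x : Dstate K) (m : nat) := (inord m : 'I_(K.*2.+1)) \in active (Y_of x).

Lemma actnE (x : Dstate K) m : (m <= K.*2)%N ->
  actn x m = ((m == 0%N) || ((Xn x m).+1 == Xn x m.-1)) &&
             ((K.*2 <= m)%N || ((Xn x m.+1).+1 != Xn x m)).
Proof.
move=> mN; rewrite /actn inE inordK ?ltnS //.
congr (_ && _).
  case: (m =P 0%N) => [->|/eqP m0] //=.
  by rewrite ext_pos // lt0n m0.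
case: (leqP (K.*2) m) => h /=.
  by rewrite ext_big.
by rewrite ext_pos //.
Qed.

Definition lip (x : Dstate K) := forall m, (m < K.*2)%N ->
  Xn x m.+1 = (Xn x m).+1 \/ Xn x m = (Xn x m.+1).+1.

Lemma act_nb (x : Dstate K) m : lip x -> (m <= K.*2)%N -> actn x m ->
  ((0 < m)%N -> Xn x m.-1 = (Xn x m).+1) /\ ((m < K.*2)%N -> Xn x m.+1 = (Xn x m).+1).
Proof.
move=> L mN; rewrite actnE // => /andP[h1 h2]; split => hm.
  by move: h1; case: eqP => [m0|_ /eqP <-]; [rewrite m0 in hm|].
move: h2; rewrite leqNgt hm /= => h2.
have := L m hm; case=> // h; by rewrite h eqxx in h2.
Qed.

Lemma nact_nb (x : Dstate K) m : lip x -> (m <= K.*2)%N -> ~~ actn x m ->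
  ((0 < m)%N /\ (Xn x m.-1).+1 = Xn x m) \/ ((m < K.*2)%N /\ (Xn x m.+1).+1 = Xn x m).
Proof.
move=> L mN; rewrite actnE // negb_and => /orP[].
  rewrite negb_or => /andP[m0 h]; left; split; first by rewrite lt0n.
  have := L m.-1; rewrite prednK ?lt0n //; move=> /(_ mN) [] // h'.
  by rewrite h' eqxx in h.
rewrite negb_or negbK -ltnNge => /andP[h1 /eqP h2]; by right.
Qed.

Definition Gstep (x : Dstate K) (c : {ffun 'I_(K.*2.+1) -> bool}) : Dstate K :=
  [ffun k => (x k + (if (k \in active (Y_of x)) && ~~ c k then 3 else 1))%N].

Lemma GstepE x c m : (m <= K.*2)%N ->
  Xn (Gstep x c) m = (Xn x m + (if actn x m && ~~ c (inord m) then 3 else 1))%N.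
Proof. by move=> _; rewrite /Xn ffunE. Qed.

Lemma lip_G x c : lip x -> lip (Gstep x c).
Proof.
move=> L m mN; rewrite !GstepE //; last exact: ltnW.
case: (L m mN) => h.
  have nA : ~~ actn x m.+1.
    apply/negP => A; have [h1 _] := act_nb L mN A; move: h1 => /(_ isT) /=; lia.
  rewrite (negbTE nA) /=; case: ifP => _; lia.
have nA : ~~ actn x m.
  apply/negP => A; have [_ h1] := act_nb L (ltnW mN) A; move: (h1 mN); lia.
rewrite (negbTE nA) /=; case: ifP => _; lia.
Qed.

Definition x0 : Dstate K := [ffun k => `|Defs.row k|%N].

Lemma x0E m : (m <= K.*2)%N -> Xn x0 m = `|m%:Z - K%:Z|%N.
Proof. by move=> mN; rewrite /Xn ffunE /Defs.row inordK. Qed.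

Lemma lip_x0 : lip x0.
Proof. move=> m mN; rewrite !x0E //; [lia | exact: ltnW]. Qed.

Fixpoint fD (col : nat -> {ffun 'I_(K.*2.+1) -> bool}) (i : nat) : Dstate K :=
  if i is i'.+1 then Gstep (fD col i') (col i') else x0.

Lemma lip_fD col i : lip (fD col i).
Proof. elim: i => [|i IH] /=; [exact: lip_x0 | exact: lip_G]. Qed.

End Comb.
Section Walks.
Variable K : nat.
Hypothesis hK : (1 <= K)%N.
Variable op : int -> int -> Prop.

Definition colop (i : int) : {ffun 'I_(K.*2.+1) -> bool} :=
  [ffun k => `[< op i (Defs.row k) >]].
Definition colD (i : nat) := colop i%:Z.
Definition Dn i m := Xn (fD colD i) m.

Lemma walk_snoc u w v n l : walk K op u w n -> step K op w v l -> walk K op u v (n + l).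
Proof.
elim=> [x sx | x y z l' n' s _ IH] st.
- have [_ [sv _]] := st; rewrite add0n -[l]addn0; exact: (walk_cons st (walk_nil op sv)).
- rewrite -addnA; exact: walk_cons s (IH st).
Qed.

Lemma stepV a j j' : - (K%:Z) <= j <= K%:Z -> - (K%:Z) <= j' <= K%:Z -> `|j - j'| = 1 ->
  step K op (a, j) (a, j') 1.
Proof. move=> /andP[h1 h2] /andP[h3 h4] h; split; [by [] | split; [by []|]]; exact: Or31. Qed.

Lemma stepH a j : - (K%:Z) <= j <= K%:Z -> op a j -> step K op (a, j) (a + 1, j) 1.
Proof.
move=> /andP[h1 h2] o; split; [by [] | split; [by []|]]; apply: Or32 => /=.
have -> : Num.min a (a + 1) = a by lia.
split => //; split => //; lia.
Qed.

Lemma stepD a j j' : - (K%:Z) <= j <= K%:Z -> - (K%:Z) <= j' <= K%:Z -> `|j - j'| = 1 ->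
  step K op (a, j) (a + 1, j') 2.
Proof. move=> /andP[h1 h2] /andP[h3 h4] h; split; [by [] | split; [by []|]]; apply: Or33 => /=; split => //; lia. Qed.

Lemma walk0n n : (n <= K)%N -> walk K op (0, 0) (0, n%:Z) n /\ walk K op (0, 0) (0, - n%:Z) n.
Proof.
elim: n => [|n IH] hn.
  have w : walk K op (0, 0) (0, 0) 0 by apply: walk_nil; split => /=; lia.
  by split; rewrite ?oppr0.
have [w1 w2] := IH (ltnW hn).
split; rewrite -addn1.
  apply: walk_snoc w1 _; apply: stepV; lia.
apply: walk_snoc w2 _; apply: stepV; lia.
Qed.

Lemma walk0 j : - (K%:Z) <= j <= K%:Z -> walk K op (0, 0) (0, j) `|j|%N.
Proof.
move=> hj; case: (lerP 0 j) => h.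
  have [w _] := walk0n (n := `|j|%N) ltac:(lia).
  by move: w; have -> : (`|j|%N)%:Z = j by lia.
have [_ w] := walk0n (n := `|j|%N) ltac:(lia).
by move: w; have -> : - (`|j|%N)%:Z = j by lia.
Qed.

Lemma Dn0 m : (m <= K.*2)%N -> Dn 0 m = `|m%:Z - K%:Z|%N.
Proof. by move=> h; rewrite /Dn /= x0E. Qed.

Lemma DnS i m : (m <= K.*2)%N -> Dn i.+1 m =
  (Dn i m + (if actn (fD colD i) m && ~~ `[< op i%:Z (m%:Z - K%:Z) >] then 3 else 1))%N.
Proof.
move=> h; rewrite /Dn /= GstepE // /colD /colop ffunE /Defs.row inordK //.
Qed.

Lemma lipD i : lip (fD colD i).
Proof. exact: lip_fD. Qed.

Lemma walk_ex i m : (m <= K.*2)%N -> walk K op (0, 0) (i%:Z, m%:Z - K%:Z) (Dn i m).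
Proof.
elim: i m => [|i IH] m hm.
  rewrite Dn0 //; apply: walk0; lia.
have eS : (i.+1)%:Z = i%:Z + 1 by lia.
rewrite DnS // eS.
set x := fD colD i.
case hA : (actn x m); case: (asboolP (op i%:Z (m%:Z - K%:Z))) => ho /=.
- apply: walk_snoc (IH m hm) _; apply: stepH => //; lia.
-
  have [a1 a2] := act_nb (lipD i) hm hA.
  have [m' [hm' [e' dm]]] : exists m', (m' <= K.*2)%N /\ Xn x m' = (Xn x m).+1 /\ (m' = m.+1 \/ m = m'.+1).
    case: (posnP m) => h.
      exists m.+1; split; [lia | split; [apply: a2; lia | by left]].
    exists m.-1; split; [lia | split; [exact: a1 | right; lia]].
  have -> : (Dn i m + 3 = Dn i m + 1 + 2)%N by lia.
  apply: (walk_snoc (w := (i%:Z, m'%:Z - K%:Z))); last by apply: stepD; lia.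
  apply: walk_snoc (IH m hm) _; apply: stepV; lia.
- apply: walk_snoc (IH m hm) _; apply: stepH => //; lia.
- have [[h1 h2]|[h1 h2]] := nact_nb (lipD i) hm (negbT hA).
  + have -> : (Dn i m + 1 = Dn i m.-1 + 2)%N by move: h2; rewrite /Dn -/x; lia.
    apply: walk_snoc (IH m.-1 ltac:(lia)) _; apply: stepD; lia.
  + have -> : (Dn i m + 1 = Dn i m.+1 + 2)%N by move: h2; rewrite /Dn -/x; lia.
    apply: walk_snoc (IH m.+1 ltac:(lia)) _; apply: stepD; lia.
Qed.

Lemma Dn_ge i m : (m <= K.*2)%N -> (Dn i m < Dn i.+1 m)%N.
Proof. move=> h; rewrite DnS //; case: ifP => _; lia. Qed.

Lemma Dn_lip i m m' : (m <= K.*2)%N -> (m' <= K.*2)%N -> (m' = m.+1 \/ m = m'.+1) ->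
  (Dn i m' <= (Dn i m).+1)%N.
Proof.
move=> h h' [e|e]; subst; have := lipD i; rewrite /lip /Dn; set x := fD colD i => L.
  have := L m ltac:(lia); lia.
have := L m' ltac:(lia); lia.
Qed.

Lemma Dn_open i m : (m <= K.*2)%N -> op i%:Z (m%:Z - K%:Z) -> Dn i.+1 m = (Dn i m).+1.
Proof.
move=> h o; rewrite DnS //; case: (asboolP (op i%:Z (m%:Z - K%:Z))) => // _.
by rewrite andbF addn1.
Qed.

Lemma Dn_diag i m m' : (m <= K.*2)%N -> (m' <= K.*2)%N -> (m' = m.+1 \/ m = m'.+1) ->
  (Dn i.+1 m' <= Dn i m + 2)%N.
Proof.
move=> h h' hm; rewrite DnS //.
have := Dn_lip i h h' hm.
case hA: (actn (fD colD i) m') => /=; last by lia.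
have [a1 a2] := act_nb (lipD i) h' hA.
case: hm => e.
  have := a1 ltac:(lia); rewrite e /= /Dn; case: ifP => _; lia.
have := a2 ltac:(lia); rewrite e /Dn; case: ifP => _; lia.
Qed.

Definition gpot (v : vertex) : nat :=
  if ((0 <= v.1)%R && (- (K%:Z) <= v.2 <= K%:Z)%R) then Dn `|v.1|%N (absz (v.2 + K%:Z))
  else (`|v.1|%N + `|v.2|%N)%N.

Lemma gpotE a j : - (K%:Z) <= j <= K%:Z ->
  gpot (a, j) = if 0 <= a then Dn `|a|%N (absz (j + K%:Z)) else (`|a|%N + `|j|%N)%N.
Proof. by move=> h; rewrite /gpot /= h andbT. Qed.

Lemma step_pot u v l : step K op u v l -> (gpot v <= gpot u + l)%N.
Proof.
case: u => a j; case: v => a' j' [[s1 s2] [[s3 s4] hs]] /=.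
have hj : - (K%:Z) <= j <= K%:Z by apply/andP.
have hj' : - (K%:Z) <= j' <= K%:Z by apply/andP.
rewrite (gpotE a hj) (gpotE a' hj').
set m := (absz (j + K%:Z)); set m' := (absz (j' + K%:Z)).
have hm : (m <= K.*2)%N by rewrite /m; lia.
have hm' : (m' <= K.*2)%N by rewrite /m'; lia.
have D0 : Dn 0 m = `|j|%N by rewrite Dn0 // /m; lia.
have D0' : Dn 0 m' = `|j'|%N by rewrite Dn0 // /m'; lia.
simpl in hs.
case: hs => [ [e1 [e2 ->]] | [e1 [e2 [ho ->]]] | [e1 [e2 ->]] ].
- subst a'. have dm : (m' = m.+1 \/ m = m'.+1) by rewrite /m /m'; lia.
  case: (lerP 0 a) => ha; last by lia.
  have := Dn_lip `|a|%N hm hm' dm; lia.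
- subst j'. have mm : m' = m by [].
  rewrite mm in D0' *.
  case: (lerP 0 a) => ha; case: (lerP 0 a') => ha'; try lia.
  + case: (ltrP a a') => h.
    * have ea : `|a'|%N = (`|a|%N).+1 by lia.
      have em : Num.min a a' = (`|a|%N)%:Z by lia.
      rewrite em (_ : j = m%:Z - K%:Z) in ho; last by rewrite /m; lia.
      by rewrite ea (Dn_open hm ho) addn1.
    * have ea : `|a|%N = (`|a'|%N).+1 by lia.
      rewrite ea; have := Dn_ge `|a'|%N hm; lia.
  + have ea : a = 0 by lia. subst a. rewrite absz0 D0; lia.
  + have ea : a' = 0 by lia. subst a'. rewrite absz0 D0; lia.
- have dm : (m' = m.+1 \/ m = m'.+1) by rewrite /m /m'; lia.
  have dm2 : (m = m'.+1 \/ m' = m.+1) by case: dm; [right|left].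
  case: (lerP 0 a) => ha; case: (lerP 0 a') => ha'; try lia.
  + case: (ltrP a a') => h.
    * have ea : `|a'|%N = (`|a|%N).+1 by lia.
      rewrite ea; exact: Dn_diag.
    * have ea : `|a|%N = (`|a'|%N).+1 by lia.
      rewrite ea; have := Dn_ge `|a'|%N hm; have := Dn_lip `|a'|%N hm hm' dm; lia.
  + have ea : a = 0 by lia. subst a. rewrite absz0 D0; lia.
  + have ea : a' = 0 by lia. subst a'. rewrite absz0 D0'; lia.
Qed.

Lemma walk_pot u v n : walk K op u v n -> (gpot v <= gpot u + n)%N.
Proof.
elim=> [x _|x y z l n' s _ IH]; first by rewrite addn0.
have := step_pot s; lia.
Qed.

Theorem fD_dist i (k : 'I_(K.*2.+1)) :
  is_dist K op (0, 0) (i%:Z, Defs.row k) (fD colD i k).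
Proof.
have hk : (k <= K.*2)%N by rewrite -ltnS.
have e : fD colD i k = Dn i k by rewrite /Dn (@XnE _ _ k k).
rewrite e; split; first exact: walk_ex.
move=> n W; have := walk_pot W.
rewrite (gpotE (0 : int) (j := 0)) ?(gpotE (i%:Z) (j := Defs.row k)) /=; try (rewrite /Defs.row; lia).
rewrite Dn0; last lia.
have -> : (absz (Defs.row k + K%:Z)) = k by rewrite /Defs.row; lia.
lia.
Qed.

End Walks.
Lemma asbool_eqb (Q : Prop) (b : bool) : `[< Q >] = b <-> (Q <-> b).
Proof.
split.
  by move=> <-; split => [q|/asboolP //]; apply/asboolP.
by move=> [h1 h2]; case: b h1 h2 => h1 h2; apply/asboolP => //; [exact: h2 | move/h1].
Qed.

Section Prob.
Context d (T : measurableType d) (R : realType) (P : probability T R) (K : nat) (eps : R)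
  (H : int -> int -> set T).
Hypothesis Hmeas : forall i j, measurable (H i j).
Hypothesis Hprob : forall i j, - (K%:Z) <= j <= K%:Z -> P (H i j) = (1 - eps)%:E.
Hypothesis Hindep : forall s : seq (int * int), uniq s ->
     (forall e, e \in s -> - (K%:Z) <= e.2 <= K%:Z) ->
     fine (P [set t | forall e, e \in s -> H e.1 e.2 t])
       = \prod_(e <- s) fine (P (H e.1 e.2)).

Definition allH (p : seq (int * int)) : set T := [set t | forall e, e \in p -> H e.1 e.2 t].

Lemma allH_meas p : measurable (allH p).
Proof.
elim: p => [|e p IH].
  have -> : allH [::] = setT by apply/seteqP; split => t //= _ e; rewrite in_nil.
  exact: measurableT.
have -> : allH (e :: p) = H e.1 e.2 `&` allH p.
  apply/seteqP; split => t /=.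
    by move=> h; split; [apply: h; rewrite mem_head | move=> e' he'; apply: h; rewrite in_cons he' orbT].
  by move=> [h1 h2] e'; rewrite in_cons => /orP[/eqP ->|/h2].
exact: measurableI.
Qed.

Definition atomset (p : seq (int * int)) (s : seq ((int * int) * bool)) : set T :=
  [set t | (forall e, e \in p -> H e.1 e.2 t) /\
           (forall eb, eb \in s -> (H eb.1.1 eb.1.2 t <-> eb.2))].

Lemma atomset_nil p : atomset p [::] = allH p.
Proof. by apply/seteqP; split => t /=; [case | split => // eb; rewrite in_nil]. Qed.

Lemma atomset_cons p e b s : atomset p ((e, b) :: s) =
  atomset p s `&` (if b then H e.1 e.2 else ~` H e.1 e.2).
Proof.
apply/seteqP; split => t /=.
  move=> [h1 h2]; split.
    by split => // eb heb; apply: h2; rewrite in_cons heb orbT.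
  have := h2 (e, b) (mem_head _ _) => /= h; clear h1 h2; case: b h => h; [exact/h | by move=> /h].
move=> [[h1 h2] h3]; split => // eb; rewrite in_cons => /orP[/eqP -> /=|/h2 //].
by case: b h3 => h3; split => // /h3.
Qed.

Lemma atom_meas p s : measurable (atomset p s).
Proof.
elim: s => [|[e b] s IH]; first by rewrite atomset_nil; exact: allH_meas.
rewrite atomset_cons; apply: measurableI => //; case: b => //; exact: measurableC.
Qed.

Definition wb (b : bool) : R := if b then 1 - eps else eps.

Lemma atomP p s : uniq (p ++ map fst s) ->
  (forall e, e \in p ++ map fst s -> - (K%:Z) <= e.2 <= K%:Z) ->
  P (atomset p s) = ((1 - eps) ^+ size p * \prod_(eb <- s) wb eb.2)%:E.
Proof.
elim: s p => [|[e b] s IH] p U S.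
  rewrite atomset_nil big_nil mulr1.
  rewrite -(fineK (fin_num_measure P _ (allH_meas p))) /allH Hindep; first last.
  - by move=> e he; apply: S; rewrite cats0.
  - by move: U; rewrite cats0.
  congr EFin.
  have : forall e, e \in p -> - (K%:Z) <= e.2 <= K%:Z by move=> e he; apply: S; rewrite cats0.
  elim: p {U S} => [|e p IHp] Sp; first by rewrite big_nil.
  rewrite big_cons IHp => [|e' he']; last by apply: Sp; rewrite in_cons he' orbT.
  by rewrite Hprob /= ?exprS //; apply: Sp; rewrite mem_head.
have U' : uniq ((e :: p) ++ map fst s).
  by move: U; rewrite /= -cat1s uniq_catCA.
have S' : forall e', e' \in (e :: p) ++ map fst s -> - (K%:Z) <= e'.2 <= K%:Z.
  by move=> e' he'; apply: S; move: he'; rewrite /= !in_cons !mem_cat !in_cons orbCA.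
clear U S; case: b.
  have -> : atomset p ((e, true) :: s) = atomset (e :: p) s.
    rewrite atomset_cons; apply/seteqP; split => t /=.
      move=> [[h1 h2] h3]; split => // e'; rewrite in_cons => /orP[/eqP -> //|/h1 //].
    by move=> [h1 h2]; split; [split => // e' he'; apply: h1; rewrite in_cons he' orbT | apply: h1; rewrite mem_head].
  by rewrite IH // big_cons /= exprS mulrCA mulrA.
have U'' : uniq (p ++ map fst s).
  by move: U'; rewrite /= => /andP[].
have S'' : forall e', e' \in p ++ map fst s -> - (K%:Z) <= e'.2 <= K%:Z.
  by move=> e' he'; apply: S'; rewrite /= in_cons he' orbT.
have -> : atomset p ((e, false) :: s) = atomset p s `\` atomset (e :: p) s.
  rewrite atomset_cons; apply/seteqP; split => t /=.
    move=> [[h1 h2] h3]; split => // [[h4 h5]]; apply: h3; apply: h4; exact: mem_head.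
  move=> [[h1 h2] h3]; split; first by split.
  move=> h4; apply: h3; split => // e'.
  by rewrite in_cons => /orP[/eqP -> //|/h1].
rewrite measureD; [|exact: atom_meas|exact: atom_meas|by rewrite ltey_eq (fin_num_measure P _ (atom_meas p s))].
rewrite -(_ : atomset (e :: p) s = atomset p s `&` atomset (e :: p) s); last first.
  apply/seteqP; split => t /=.
    move=> [h1 h2]; split; last by split.
    split => // e' he'; apply: h1; by rewrite in_cons he' orbT.
  by move=> [_ ?].
rewrite -[LHS]/(P (atomset p s) - P (atomset (e :: p) s))%E.
rewrite (IH p U'' S'') (IH (e :: p) U' S') -EFinB; congr EFin; rewrite big_cons /= exprS /wb; ring.
Qed.

Definition wf (F : finType) (b : {ffun F -> bool}) : R := \prod_i wb (b i).

Lemma wf_sum (F : finType) : \sum_(b : {ffun F -> bool}) wf b = 1.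
Proof.
rewrite /wf -(bigA_distr_bigA (fun (_ : F) (j : bool) => wb j)) /=.
apply: big1 => i _; rewrite big_bool /wb /=; by rewrite subrK.
Qed.

Lemma sum_fib_meas (F : finType) (f : T -> F) (hf : forall b, measurable [set t | f t = b])
  (r : seq F) : measurable [set t | f t \in r].
Proof.
elim: r => [|b r IH].
  have -> : [set t | f t \in [::]] = set0 by apply/seteqP; split => t //=; rewrite in_nil.
  exact: measurable0.
have -> : [set t | f t \in b :: r] = [set t | f t = b] `|` [set t | f t \in r].
  apply/seteqP; split => t /=; rewrite in_cons.
    by move=> /orP[/eqP ->|h]; [left|right].
  by move=> [->|->]; rewrite ?eqxx ?orbT.
exact: measurableU.
Qed.

Lemma sum_fib (F : finType) (f : T -> F) (hf : forall b, measurable [set t | f t = b])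
  (r : seq F) : uniq r -> P [set t | f t \in r] = \sum_(b <- r) P [set t | f t = b].
Proof.
elim: r => [|b r IH] U.
  have -> : [set t | f t \in [::]] = set0 by apply/seteqP; split => t //=; rewrite in_nil.
  by rewrite big_nil measure0.
move: U => /= /andP[nb U].
have -> : [set t | f t \in b :: r] = [set t | f t = b] `|` [set t | f t \in r].
  apply/seteqP; split => t /=; rewrite in_cons.
    by move=> /orP[/eqP ->|h]; [left|right].
  by move=> [->|->]; rewrite ?eqxx ?orbT.
rewrite big_cons -IH //.
apply: measureU => //; first exact: sum_fib_meas.
apply/seteqP; split => t //= [-> h]; by rewrite h in nb.
Qed.

Section Fibers.
Variables (E1 E2 : finType) (e1 : E1 -> int * int) (e2 : E2 -> int * int).
Hypothesis Ue : uniq (map e1 (enum E1) ++ map e2 (enum E2)).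
Hypothesis Se : forall e, e \in map e1 (enum E1) ++ map e2 (enum E2) ->
  - (K%:Z) <= e.2 <= K%:Z.

Definition cfg1 (t : T) : {ffun E1 -> bool} := [ffun i => `[< H (e1 i).1 (e1 i).2 t >]].
Definition cfg2 (t : T) : {ffun E2 -> bool} := [ffun i => `[< H (e2 i).1 (e2 i).2 t >]].

Lemma fiberE b1 b2 : [set t | (cfg1 t, cfg2 t) = (b1, b2)] =
  atomset [::] ([seq (e1 i, b1 i) | i <- enum E1] ++ [seq (e2 i, b2 i) | i <- enum E2]).
Proof.
apply/seteqP; split => t /=.
  move=> [<- <-]; split => // eb; rewrite mem_cat => /orP[/mapP[i _ ->]|/mapP[i _ ->]] /=;
    rewrite ffunE; exact: (asbool_eqb _ _).1.
move=> [_ h]; congr pair; apply/ffunP => i; rewrite ffunE; apply/asbool_eqb.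
  by apply: (h (e1 i, b1 i)); rewrite mem_cat map_f ?mem_enum.
by apply: (h (e2 i, b2 i)); rewrite mem_cat map_f ?mem_enum ?orbT.
Qed.

Lemma fiberP b1 b2 : P [set t | (cfg1 t, cfg2 t) = (b1, b2)] = (wf b1 * wf b2)%:E.
Proof.
have em : map fst ([seq (e1 i, b1 i) | i <- enum E1] ++ [seq (e2 i, b2 i) | i <- enum E2])
   = map e1 (enum E1) ++ map e2 (enum E2).
  by rewrite map_cat -!map_comp.
rewrite fiberE atomP ?em // expr0 mul1r big_cat !big_map /= /wf -!enumT !big_enum.
by [].
Qed.

Lemma prob_psi (psi : {ffun E1 -> bool} -> {ffun E2 -> bool} -> bool) :
  P [set t | psi (cfg1 t) (cfg2 t)] =
  (\sum_b1 \sum_b2 (if psi b1 b2 then wf b1 * wf b2 else 0))%:E.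
Proof.
pose f := fun t => (cfg1 t, cfg2 t).
have hf : forall b, measurable [set t | f t = b].
  by move=> [b1 b2]; rewrite /f fiberE; exact: atom_meas.
have -> : [set t | psi (cfg1 t) (cfg2 t)] = [set t | f t \in enum [pred b | psi b.1 b.2]].
  by apply/seteqP; split => t /=; rewrite mem_enum inE.
rewrite sum_fib ?enum_uniq // big_enum /=.
rewrite (eq_bigr (fun b => (wf b.1 * wf b.2)%:E)); last first.
  by move=> [b1 b2] _; exact: fiberP.
rewrite sumEFin; congr EFin.
rewrite pair_big /= big_mkcond /=; apply: eq_bigr => -[b1 b2] _ /=.
by rewrite inE.
Qed.

End Fibers.

End Prob.
Lemma YG K (x : Dstate K) c : lip x ->
  Y_of (Gstep x c) = apply_moves (Y_of x) (active (Y_of x) :&: [set k | ~~ c k]).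
Proof.
move=> L; apply/ffunP => k; rewrite YE [RHS]ffunE.
have hk : (k < K.*2)%N := ltn_ord k.
rewrite !GstepE //; last exact: ltnW.
have e1 : lift ord0 k = inord k.+1 :> 'I_(K.*2.+1).
  by apply: val_inj; rewrite /= inordK // /bump /= add1n.
have e2 : widen_ord (leqnSn _) k = inord k :> 'I_(K.*2.+1).
  by apply: val_inj; rewrite /= inordK // ltnW.
rewrite e1 e2 !finset.in_setI -/(actn x k.+1) -/(actn x k) !finset.in_set YE.
case: (L k hk) => h.
  have nA : ~~ actn x k.+1.
    apply/negP => A; have [h1 _] := act_nb L hk A; move: (h1 isT) => /=; lia.
  rewrite (negbTE nA) /=.
  have -> : ((Xn x k.+1).+1 == Xn x k) = false by apply/eqP; lia.
  by case: (actn x k && ~~ c (inord k)) => /=; [apply/eqP; lia | apply/eqP => ?; lia].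
have nA : ~~ actn x k.
  apply/negP => A; have [_ h1] := act_nb L (ltnW hk) A; move: (h1 hk); lia.
rewrite (negbTE nA) /= orbF.
have -> : ((Xn x k.+1).+1 == Xn x k) = true by apply/eqP; lia.
by case: (actn x k.+1 && ~~ c (inord k.+1)) => /=; [apply/eqP => ?; lia | apply/eqP; lia].
Qed.

Section Kernel.
Variables (R : realType) (eps : R) (K : nat).

Lemma cnt (A S : {set 'I_(K.*2.+1)}) : S \subset A ->
  \sum_(c : {ffun 'I_(K.*2.+1) -> bool})
     (if A :&: [set k | ~~ c k] == S then wf eps c else 0)
  = eps ^+ #|S| * (1 - eps) ^+ (#|A| - #|S|).
Proof.
move=> SA.
pose F := fun i (b : bool) =>
  if i \in A then (if ~~ b == (i \in S) then wb eps b else 0) else wb eps b.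
transitivity (\sum_(c : {ffun 'I_(K.*2.+1) -> bool}) \prod_i F i (c i)).
  apply: eq_bigr => c _; case: eqP => [hS|hS].
    rewrite /wf; apply: eq_bigr => i _; rewrite /F; case: ifP => // iA.
    by rewrite -hS !inE iA /= eqxx.
  case: (boolP [exists i, (i \in A) && (~~ c i != (i \in S))]).
    move=> /existsP[i /andP[iA ne]].
    by rewrite (bigD1 i) //= /F iA (negbTE ne) mul0r.
  rewrite negb_exists => /forallP hall; exfalso; apply: hS; apply/finset.setP => i.
  rewrite !inE; have := hall i; case iA: (i \in A) => /=.
    by rewrite negbK => /eqP.
  move=> _; apply/esym/negP => iS; by rewrite (fintype.subsetP SA _ iS) in iA.
rewrite -(bigA_distr_bigA F) /=.
rewrite (eq_bigr (fun i => if i \in S then eps else if i \in A then 1 - eps else 1)); last first.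
  move=> i _; rewrite big_bool /F /wb /=.
  case iS: (i \in S).
    by rewrite (fintype.subsetP SA _ iS) /= add0r.
  by case: (i \in A) => /=; rewrite ?addr0 // subrK.
rewrite (bigID (mem S)) /=.
rewrite (eq_bigr (fun _ => eps)); last by move=> i ->.
rewrite prodr_const; congr (_ * _).
rewrite (eq_bigr (fun i => if i \in A then 1 - eps else 1)); last by move=> i /negbTE ->.
rewrite (bigID (mem A)) /= (eq_bigr (fun _ => 1 - eps)); last by move=> i /andP[_ ->].
rewrite [X in _ * X]big1 ?mulr1; last by move=> i /andP[_ /negbTE ->].
rewrite (eq_bigl (mem (A :\: S))); last by move=> i; rewrite /= !inE andbC.
by rewrite prodr_const cardsD (finset.setIidPr SA).
Qed.

Lemma kernel_sum (y y' : Ystate K) (f : {ffun 'I_(K.*2.+1) -> bool} -> Ystate K)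
  (hf : forall c, f c = apply_moves y (active y :&: [set k | ~~ c k])) :
  \sum_c (if f c == y' then wf eps c else 0) = tasep_kernel eps y y'.
Proof.
rewrite /tasep_kernel.
rewrite (eq_bigr (fun S => \sum_(c : {ffun 'I_(K.*2.+1) -> bool})
     (if active y :&: [set k | ~~ c k] == S then wf eps c else 0))); last first.
  by move=> S /andP[SA _]; rewrite cnt.
rewrite exchange_big /=; apply: eq_bigr => c _.
rewrite hf; set S0 := active y :&: [set k | ~~ c k].
case: (boolP (apply_moves y S0 == y')) => h.
  rewrite (bigD1 S0) /=; last by rewrite finset.subsetIl h.
  rewrite eqxx big1 ?addr0 // => S /andP[_ nS].
  by rewrite eq_sym (negbTE nS).
rewrite ?(negbTE h); symmetry; apply: big1 => S /andP[_ hS]; case: eqP => // eS.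
by rewrite eS hS in h.
Qed.

End Kernel.
Lemma fD_ext K (col col' : nat -> {ffun 'I_(K.*2.+1) -> bool}) k :
  (forall i, (i < k)%N -> col i = col' i) -> fD col k = fD col' k.
Proof.
elim: k => [|k IH] h //=.
by rewrite IH ?h // => i hi; apply: h; exact: ltnW.
Qed.

Section Assembly.
Variable K : nat.
Hypothesis hK : (1 <= K)%N.

Definition e1f (n : nat) (p : 'I_n * 'I_(K.*2.+1)) : int * int := ((p.1 : nat)%:Z, Defs.row p.2).
Definition e2f (n : nat) (k : 'I_(K.*2.+1)) : int * int := (n%:Z, Defs.row k).
Definition colb n (b1 : {ffun 'I_n * 'I_(K.*2.+1) -> bool}) (i : nat) :
  {ffun 'I_(K.*2.+1) -> bool} :=
  [ffun k => if (insub i : option 'I_n) is Some i' then b1 (i', k) else false].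

Lemma row_inj : injective (@Defs.row K).
Proof. move=> a b; rewrite /Defs.row => h; apply: ord_inj; lia. Qed.

Lemma e_uniq n : uniq (map (@e1f n) (enum {: 'I_n * 'I_(K.*2.+1)}) ++ map (e2f n) (enum 'I_(K.*2.+1))).
Proof.
rewrite cat_uniq; apply/and3P; split.
- rewrite map_inj_uniq ?enum_uniq // => -[a b] [a' b'] [h1 h2].
  congr pair; [apply: ord_inj; lia | exact: row_inj].
- apply/hasPn => e /mapP[k _ ->]; apply/negP => /mapP[p _].
  rewrite /e1f /e2f => -[h _]; by move: (ltn_ord p.1); rewrite -h ltnn.
- rewrite map_inj_uniq ?enum_uniq // => k k' [h]; exact: row_inj.
Qed.

Lemma e_strip n e : e \in map (@e1f n) (enum {: 'I_n * 'I_(K.*2.+1)}) ++ map (e2f n) (enum 'I_(K.*2.+1)) ->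
  - (K%:Z) <= e.2 <= K%:Z.
Proof.
rewrite mem_cat => /orP[/mapP[[a b] _ ->]|/mapP[k _ ->]]; rewrite /= /Defs.row.
  have := ltn_ord b; lia.
have := ltn_ord k; lia.
Qed.

Context d (T : measurableType d) (H : int -> int -> set T).

Definition opt (t : T) := fun a b => H a b t.

Lemma colb_cfg n t i : (i < n)%N -> colb (cfg1 H (@e1f n) t) i = colD K (opt t) i.
Proof.
move=> hi; apply/ffunP => k; rewrite !ffunE; case: insubP => [i' _ ei|]; last by rewrite hi.
by rewrite ffunE /e1f /= ei.
Qed.

Lemma cfg2E n t : cfg2 H (e2f n) t = colD K (opt t) n.
Proof. by apply/ffunP => k; rewrite !ffunE. Qed.

Lemma fD_cfg n t k : (k <= n)%N ->
  fD (colb (cfg1 H (@e1f n) t)) k = fD (colD K (opt t)) k.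
Proof. move=> hk; apply: fD_ext => i hi; apply: colb_cfg; lia. Qed.

Lemma fD_cfgS n t : fD (colD K (opt t)) n.+1 =
  Gstep (fD (colb (cfg1 H (@e1f n) t)) n) (cfg2 H (e2f n) t).
Proof. by rewrite /= fD_cfg // cfg2E. Qed.

Lemma is_dist_uniq op u v a b : is_dist K op u v a -> is_dist K op u v b -> a = b.
Proof. move=> [w1 m1] [w2 m2]; apply/eqP; rewrite eqn_leq m1 // m2 //. Qed.

Lemma D_event_iff i (x : Dstate K) t : D_event H i x t <-> x = fD (colD K (opt t)) i.
Proof.
split.
  move=> h; apply/ffunP => k; apply: is_dist_uniq (h k) _; exact: fD_dist.
by move=> -> k; exact: fD_dist.
Qed.

Lemma Y_event_iff i (y : Ystate K) t : Y_event H i y t <-> Y_of (fD (colD K (opt t)) i) = y.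
Proof.
split.
  by move=> [x [/D_event_iff -> <-]].
by move=> <-; exists (fD (colD K (opt t)) i); split => //; apply/D_event_iff.
Qed.

End Assembly.
Lemma sum_split (R : realType) (F1 F2 : finType) (A : {ffun F1 -> bool} -> bool)
  (B : {ffun F1 -> bool} -> {ffun F2 -> bool} -> bool)
  (w1 : {ffun F1 -> bool} -> R) (w2 : {ffun F2 -> bool} -> R) :
  \sum_b1 \sum_b2 (if A b1 && B b1 b2 then w1 b1 * w2 b2 else 0) =
  \sum_b1 (if A b1 then w1 b1 * \sum_b2 (if B b1 b2 then w2 b2 else 0) else 0).
Proof.
apply: eq_bigr => b1 _; case: (A b1) => /=.
  by rewrite big_distrr /=; apply: eq_bigr => b2 _; case: (B b1 b2); rewrite ?mulr0.
by rewrite big1_eq.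
Qed.

Lemma sum_split1 (R : realType) (eps : R) (F1 F2 : finType) (A : {ffun F1 -> bool} -> bool)
  (w1 : {ffun F1 -> bool} -> R) :
  \sum_b1 \sum_(b2 : {ffun F2 -> bool}) (if A b1 then w1 b1 * wf eps b2 else 0) =
  \sum_b1 (if A b1 then w1 b1 else 0).
Proof.
apply: eq_bigr => b1 _; case: (A b1) => /=.
  by rewrite -big_distrr /= (wf_sum eps F2) mulr1.
by rewrite big1_eq.
Qed.

Lemma sum_fact (R : realType) (F1 : finType) (A : {ffun F1 -> bool} -> bool)
  (w1 : {ffun F1 -> bool} -> R) (q : R) :
  \sum_b1 (if A b1 then w1 b1 * q else 0) = (\sum_b1 (if A b1 then w1 b1 else 0)) * q.
Proof. rewrite big_distrl /=; apply: eq_bigr => b1 _; case: (A b1) => //; by rewrite mul0r. Qed.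

Unset Implicit Arguments.

Theorem proposition3 (d : measure_display) (T : measurableType d) (R : realType)
  (P : probability T R) (K : nat) (eps : R)
  (H : int -> int -> set T)
  (hK : (1 <= K)%N) (heps0 : 0 < eps) (heps1 : eps < 1)
  (Hmeas : forall i j, measurable (H i j))
  (Hprob : forall i j, - (K%:Z) <= j <= K%:Z -> P (H i j) = (1 - eps)%:E)
  (Hindep : forall s : seq (int * int), uniq s ->
     (forall e, e \in s -> - (K%:Z) <= e.2 <= K%:Z) ->
     fine (P [set t | forall e, e \in s -> H e.1 e.2 t])
       = \prod_(e <- s) fine (P (H e.1 e.2))) :
  is_markov P (@D_event T K H) /\
  markov_with P (@Y_event T K H) (@tasep_kernel R K eps).
Proof.
have PP := prob_psi Hmeas Hprob Hindep.
split.
- exists (fun (x x' : Dstate K) => \sum_(c : {ffun 'I_(K.*2.+1) -> bool})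
           (if Gstep x c == x' then wf eps c else 0)).
  move=> n x.
  have U := e_uniq hK n; have S := @e_strip K hK n.
  pose A := fun b1 : {ffun 'I_n * 'I_(K.*2.+1) -> bool} =>
    [forall k : 'I_n.+1, fD (colb b1) k == x k].
  have ex : forall t k, D_event H k (x k) t <-> x k = fD (colD K (opt H t)) k.
    by move=> t k; exact: (D_event_iff hK).
  have -> : [set t | forall k, (k <= n.+1)%N -> D_event H k (x k) t] =
    [set t | (fun b1 b2 => A b1 && (Gstep (x n) b2 == x n.+1))
                (cfg1 H (@e1f K n) t) (cfg2 H (@e2f K n) t)].
    apply/seteqP; split => t /=.
      move=> h; apply/andP; split.
        apply/forallP => k; have hk := ltn_ord k; apply/eqP; rewrite (fD_cfg hK) //.
        by apply/esym/ex/h; rewrite -ltnS ltnW.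
      apply/eqP; rewrite (proj1 (ex t n.+1) (h _ (leqnn _))) (fD_cfgS hK).
      by rewrite (proj1 (ex t n) (h _ (leqnSn _))) (fD_cfg hK).
    move=> /andP[/forallP hA /eqP hB] k hk; apply/ex.
    have hn := hA (inord n); rewrite inordK // in hn.
    case: (ltngtP k n.+1) => hk'; last 1 first.
      by subst k; rewrite (fD_cfgS hK) -hB; move/eqP: hn => <-.
      have := hA (inord k); rewrite inordK // => /eqP <-; by rewrite (fD_cfg hK).
    by rewrite ltnNge hk in hk'.
  have -> : [set t | forall k, (k <= n)%N -> D_event H k (x k) t] =
    [set t | (fun b1 (b2 : {ffun 'I_(K.*2.+1) -> bool}) => A b1)
                (cfg1 H (@e1f K n) t) (cfg2 H (@e2f K n) t)].
    apply/seteqP; split => t /=.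
      move=> h; apply/forallP => k; have hk := ltn_ord k; apply/eqP; rewrite (fD_cfg hK) //.
      by apply/esym/ex/h; rewrite -ltnS.
    move=> /forallP hA k hk; apply/ex.
    have := hA (inord k); rewrite inordK // => /eqP <-; by rewrite (fD_cfg hK).
  rewrite (PP _ _ _ _ U S (fun b1 b2 => A b1 && (Gstep (x n) b2 == x n.+1))).
  rewrite (PP _ _ _ _ U S (fun b1 b2 => A b1)).
  rewrite -EFinM; congr EFin.
  rewrite (sum_split A (fun _ b2 => Gstep (x n) b2 == x n.+1)) sum_split1.
  by rewrite sum_fact.
- move=> n y.
  have U := e_uniq hK n; have S := @e_strip K hK n.
  pose A := fun b1 : {ffun 'I_n * 'I_(K.*2.+1) -> bool} =>
    [forall k : 'I_n.+1, Y_of (fD (colb b1) k) == y k].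
  have ex : forall t k, Y_event H k (y k) t <-> Y_of (fD (colD K (opt H t)) k) = y k.
    by move=> t k; exact: (Y_event_iff hK).
  have -> : [set t | forall k, (k <= n.+1)%N -> Y_event H k (y k) t] =
    [set t | (fun b1 b2 => A b1 && (Y_of (Gstep (fD (colb b1) n) b2) == y n.+1))
                (cfg1 H (@e1f K n) t) (cfg2 H (@e2f K n) t)].
    apply/seteqP; split => t /=.
      move=> h; apply/andP; split.
        apply/forallP => k; have hk := ltn_ord k; apply/eqP; rewrite (fD_cfg hK) //.
        by apply/ex/h; rewrite -ltnS ltnW.
      by apply/eqP; rewrite -(fD_cfgS hK); apply/ex/h.
    move=> /andP[/forallP hA /eqP hB] k hk; apply/ex.
    case: (ltngtP k n.+1) => hk'; last 1 first.
      by subst k; rewrite (fD_cfgS hK) -hB.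
      have := hA (inord k); rewrite inordK // => /eqP <-; by rewrite (fD_cfg hK).
    by rewrite ltnNge hk in hk'.
  have -> : [set t | forall k, (k <= n)%N -> Y_event H k (y k) t] =
    [set t | (fun b1 (b2 : {ffun 'I_(K.*2.+1) -> bool}) => A b1)
                (cfg1 H (@e1f K n) t) (cfg2 H (@e2f K n) t)].
    apply/seteqP; split => t /=.
      move=> h; apply/forallP => k; have hk := ltn_ord k; apply/eqP; rewrite (fD_cfg hK) //.
      by apply/ex/h; rewrite -ltnS.
    move=> /forallP hA k hk; apply/ex.
    have := hA (inord k); rewrite inordK // => /eqP <-; by rewrite (fD_cfg hK).
  rewrite (PP _ _ _ _ U S (fun b1 b2 => A b1 && (Y_of (Gstep (fD (colb b1) n) b2) == y n.+1))).
  rewrite (PP _ _ _ _ U S (fun b1 b2 => A b1)).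
  rewrite -EFinM; congr EFin.
  rewrite (sum_split A (fun b1 b2 => Y_of (Gstep (fD (colb b1) n) b2) == y n.+1)) sum_split1.
  rewrite -sum_fact; apply: eq_bigr => b1 _.
  case hA: (A b1) => //; congr (_ * _).
  have hn := (forallP hA) (inord n); rewrite inordK // in hn; move/eqP: hn => <-.
  apply: kernel_sum => c; apply: YG; exact: lip_fD.
Qed.
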